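(* Let $\alpha>0$, $\beta>0$, $D>0$, $T\ge1$, $X=[-D/2,D/2]\subseteq\mathbb R$ and $x_0=0$. For $\theta=(\theta_1,\dots,\theta_T)'\in X^T$ let $f_t(x)=\frac\alpha2(x-\theta_t)^2$ and $$C_1^T(x)=\sum_{t=1}^T\Big(f_t(x_t)+\frac\beta2(x_t-x_{t-1})^2\Big).$$ Then for any $\theta\in X^T$ there exists a matrix $A=(a_{t,s})\in\mathbb R^{T\times T}$ such that $x^*=A\theta$, where $x^*=\arg\min_{x\in X^T}C_1^T(x)$. Moreover, the entries of $A$ satisfy $$a_{t,t+\tau}\ge\frac{\alpha}{\alpha+\beta}(1-\rho)\rho^{\tau}$$ for all $t$ and all $\tau\ge0$ with $t+\tau\le T$, where $Q_f=\frac{\alpha+4\beta}{\alpha}$ and $\rho=\frac{\sqrt{Q_f}-1}{\sqrt{Q_f}+1}$. *)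

(* Defs.v *)
From HB Require Import structures.
From mathcomp Require Import all_boot all_order all_algebra.
From mathcomp Require Import reals.
Set Implicit Arguments. Unset Strict Implicit. Unset Printing Implicit Defensive.
Import Order.TTheory GRing.Theory Num.Theory.
Local Open Scope ring_scope.

Definition vget (R : realType) (T : nat) (x : 'cV[R]_T) (k : nat) : R :=
  if @insub nat (fun k => (k < T)%N) 'I_T k is Some i then x i 0 else 0.

(* previous decision x_{t-1}, with x_0 = 0 (0-based: predecessor of index 0 is x0 = 0) *)
Definition prev (R : realType) (T : nat) (x : 'cV[R]_T) (t : 'I_T) : R :=
  if (t == 0 :> nat) then 0 else vget x (t.-1).

Definition cost (R : realType) (T : nat) (alpha beta : R) (theta x : 'cV[R]_T) : R :=
  \sum_(t < T) (alpha / 2 * (x t 0 - theta t 0) ^+ 2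
                + beta / 2 * (x t 0 - prev x t) ^+ 2).

Definition inXT (R : realType) (T : nat) (D : R) (x : 'cV[R]_T) : Prop :=
  forall t : 'I_T, - (D / 2) <= x t 0 <= D / 2.

Definition is_argmin (R : realType) (T : nat) (alpha beta D : R) (theta x : 'cV[R]_T) : Prop :=
  inXT D x /\ forall y : 'cV[R]_T, inXT D y -> cost alpha beta theta x <= cost alpha beta theta y.

Definition Qf (R : realType) (alpha beta : R) : R := (alpha + 4 * beta) / alpha.
Definition rho (R : realType) (alpha beta : R) : R :=
  (Num.sqrt (Qf alpha beta) - 1) / (Num.sqrt (Qf alpha beta) + 1).

(* Main.v *)
Require Import Defs.
From HB Require Import structures.
From mathcomp Require Import all_boot all_order all_algebra.
From mathcomp Require Import reals.
From mathcomp Require Import ring lra zify.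
Import Order.TTheory GRing.Theory Num.Theory.
Local Open Scope ring_scope.
Set Implicit Arguments. Unset Strict Implicit. Unset Printing Implicit Defensive.

Section Aux.
Variable R : realType.
Variable T : nat.
Variables alpha beta : R.

Lemma vget_lt (x : 'cV[R]_T) k (hk : (k < T)%N) : vget x k = x (Ordinal hk) 0.
Proof.
rewrite /vget; case: insubP => [i _ hi | /negP //].
by congr (x _ 0); apply: val_inj.
Qed.

Lemma vget_ge (x : 'cV[R]_T) k : (T <= k)%N -> vget x k = 0.
Proof.
rewrite /vget; case: insubP => [i hi _|//] hk.
by move: hi; rewrite ltnNge hk.
Qed.

Lemma vget_ord (x : 'cV[R]_T) (i : 'I_T) : vget x i = x i 0.
Proof. by rewrite (vget_lt x (ltn_ord i)); congr (x _ 0); apply: val_inj. Qed.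

Lemma sum_delta (x : 'cV[R]_T) k :
  \sum_(j < T) (((j : nat) == k)%:R * x j 0) = vget x k.
Proof.
case: (ltnP k T) => hk.
- rewrite (vget_lt x hk) (bigD1 (Ordinal hk)) //= eqxx mul1r big1 ?addr0 // => j hj.
  rewrite (_ : ((j : nat) == k) = false) ?mul0r //.
  apply/negbTE; move: hj; apply: contra => /eqP e; apply/eqP/val_inj; exact e.
- rewrite vget_ge // big1 // => j _.
  have : (j : nat) != k by rewrite neq_ltn (leq_trans (ltn_ord j) hk).
  by move/negbTE->; rewrite mul0r.
Qed.

Definition S : 'M[R]_T := \matrix_(i, j) (((i : nat) != 0%N) && ((j : nat) == (i : nat).-1))%:R.
Definition Dm : 'M[R]_T := 1%:M - S.
Definition H : 'M[R]_T := alpha%:M + beta *: (Dm^T *m Dm).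

Lemma S_mul (x : 'cV[R]_T) t : (S *m x) t 0 = Defs.prev x t.
Proof.
rewrite mxE /Defs.prev; under eq_bigr do rewrite mxE.
have [t0|tn0] := eqVneq (t : nat) 0%N.
- by rewrite t0 /= big1 // => j _; rewrite mul0r.
- by rewrite /= sum_delta.
Qed.

Lemma ST_mul (u : 'cV[R]_T) t : (S^T *m u) t 0 = vget u t.+1.
Proof.
rewrite mxE; under eq_bigr do rewrite !mxE.
rewrite -sum_delta; apply: eq_bigr => j _; congr (_%:R * _).
by case: j => [[|j] hj] //=; rewrite eqSS eq_sym.
Qed.

Lemma D_mul (x : 'cV[R]_T) t : (Dm *m x) t 0 = x t 0 - Defs.prev x t.
Proof. by rewrite /Dm mulmxBl mul1mx !mxE -S_mul !mxE. Qed.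

Lemma DT_mul (u : 'cV[R]_T) t : (Dm^T *m u) t 0 = u t 0 - vget u t.+1.
Proof. by rewrite /Dm linearB /= trmx1 mulmxBl mul1mx !mxE -ST_mul !mxE. Qed.

Lemma H_mul (v : 'cV[R]_T) t : (H *m v) t 0 = alpha * v t 0 + beta * (v t 0 - Defs.prev v t)
   + beta * (if (t.+1 < T)%N then v t 0 - vget v t.+1 else 0).
Proof.
rewrite /H mulmxDl mul_scalar_mx -scalemxAl -mulmxA.
have e (c : R) (M : 'cV[R]_T) : (c *: M) t 0 = c * M t 0 by rewrite mxE.
rewrite [in LHS]mxE !e DT_mul D_mul.
case: ifP => hlt.
- rewrite (vget_lt _ hlt) D_mul /Defs.prev /= (vget_lt v hlt) vget_ord; ring.
- rewrite vget_ge ?subr0 ?mulr0 ?addr0 //; by rewrite leqNgt hlt.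
Qed.

Lemma minprinc (ha : 0 < alpha) (hb : 0 < beta) (hT : (0 < T)%N) (v : 'cV[R]_T) :
  (forall t, 0 <= (H *m v) t 0) -> forall t, 0 <= v t 0.
Proof.
move=> hv.
have [m _ hm] := @Order.TotalTheory.arg_minP _ R 'I_T (Ordinal hT) xpredT (fun i => v i 0) isT.
move=> t.
suff h0 : 0 <= v m 0 by exact: le_trans h0 (hm t isT).
rewrite leNgt; apply/negP => hneg.
have := hv m; rewrite H_mul.
have h1 : v m 0 - Defs.prev v m <= 0.
  rewrite /Defs.prev; case: ifP => _; first lra.
  case: (ltnP (m : nat).-1 T) => h; last by rewrite vget_ge //; lra.
  by rewrite vget_lt subr_le0; exact: hm.
have h2 : (if ((m : nat).+1 < T)%N then v m 0 - vget v m.+1 else 0) <= 0.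
  case: ifP => h //; rewrite vget_lt subr_le0; exact: hm.
move: h1 h2; set a := v m 0 - _; set b := (if _ then _ else _) => h1 h2.
nra.
Qed.

Lemma compare (ha : 0 < alpha) (hb : 0 < beta) (hT : (0 < T)%N) (v w : 'cV[R]_T) :
  (forall t, (H *m w) t 0 <= (H *m v) t 0) -> forall t, w t 0 <= v t 0.
Proof.
move=> h t; have := @minprinc ha hb hT (v - w) _ t.
rewrite !mxE subr_ge0; apply => s; rewrite mulmxBr !mxE.
have := h s; rewrite !mxE subr_ge0 //.
Qed.

Lemma H_sym : H^T = H.
Proof. by rewrite /H linearD /= tr_scalar_mx linearZ /= trmx_mul trmxK. Qed.

Lemma H_unit (ha : 0 < alpha) (hb : 0 < beta) (hT : (0 < T)%N) : H \in unitmx.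
Proof.
rewrite -row_free_unit; apply/inj_row_free => v hv.
have hv' : H *m v^T = 0 by rewrite -{1}H_sym -trmx_mul hv trmx0.
have h1 := @minprinc ha hb hT (v^T) (fun t => ltac:(by rewrite hv' mxE)).
have h2 := @minprinc ha hb hT (- v^T) (fun t => ltac:(by rewrite mulmxN hv' oppr0 mxE)).
apply/rowP => j; have := h1 j; have := h2 j; rewrite !mxE; lra.
Qed.

Lemma H_mul2 (v : 'cV[R]_T) t :
  (H *m v) t 0 = alpha * v t 0 + beta * (Dm^T *m (Dm *m v)) t 0.
Proof.
rewrite /H mulmxDl mul_scalar_mx -scalemxAl -mulmxA.
by rewrite [in LHS]mxE !mxE.
Qed.

Definition B (u v : 'cV[R]_T) := \sum_(t < T) u t 0 * v t 0.

Lemma B_mx u v : B u v = (u^T *m v) 0 0.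
Proof. by rewrite /B mxE; apply: eq_bigr => i _; rewrite mxE. Qed.

Lemma B_D h w : B (Dm *m h) w = B h (Dm^T *m w).
Proof. by rewrite !B_mx trmx_mul mulmxA. Qed.

Lemma cost_expand (theta x h : 'cV[R]_T) :
  cost alpha beta theta (x + h) = cost alpha beta theta x
    + \sum_(t < T) (alpha / 2 * (h t 0) ^+ 2 + beta / 2 * ((Dm *m h) t 0) ^+ 2)
    + (alpha * B h (x - theta) + beta * B (Dm *m h) (Dm *m x)).
Proof.
have e1 (u v : 'cV[R]_T) t : (u + v) t 0 = u t 0 + v t 0 by rewrite mxE.
have e2 (u v : 'cV[R]_T) t : (u - v) t 0 = u t 0 - v t 0 by rewrite !mxE.
rewrite /cost /B !mulr_sumr -!big_split /=; apply: eq_bigr => t _.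
rewrite -!D_mul mulmxDr !e1 [(- theta) t 0]mxE; field.
by [].
Qed.

Lemma cost_min (ha : 0 < alpha) (hb : 0 < beta) (theta x : 'cV[R]_T) :
  H *m x = alpha *: theta -> forall y, cost alpha beta theta x <= cost alpha beta theta y.
Proof.
move=> hx y.
have := cost_expand theta x (y - x); rewrite addrC subrK => ->.
have -> : alpha * B (y - x) (x - theta) + beta * B (Dm *m (y - x)) (Dm *m x) = 0.
  rewrite B_D /B !mulr_sumr -big_split big1 // => t _.
  have := H_mul2 x t; rewrite hx [(alpha *: theta) t 0]mxE [(x - theta) t 0]mxE => e.
  have e' : beta * (Dm^T *m (Dm *m x)) t 0 = alpha * theta t 0 - alpha * x t 0 by rewrite e; ring.
  rewrite /= [(- theta) t 0]mxE.
  transitivity ((y - x) t 0 * (alpha * (x t 0 - theta t 0) + beta * (Dm^T *m (Dm *m x)) t 0)); first by rewrite /=; ring.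
  by rewrite e'; ring.
rewrite /= addr0 lerDl; apply: sumr_ge0 => t _.
apply: addr_ge0; apply: mulr_ge0; rewrite ?sqr_ge0 //; lra.
Qed.

Lemma H_const (ha : 0 < alpha) (hb : 0 < beta) (a : R) (ha0 : 0 <= a) t :
  alpha * a <= (H *m (const_mx a : 'cV[R]_T)) t 0.
Proof.
rewrite H_mul mxE /Defs.prev.
have hb0 : 0 <= beta * a by apply: mulr_ge0 => //; lra.
case: ifP => _.
- case: ifP => h; first rewrite (vget_lt _ h) mxE; lra.
- have h1 : ((t : nat).-1 < T)%N by apply: leq_ltn_trans (leq_pred t) (ltn_ord t).
  rewrite (vget_lt _ h1) mxE.
  case: ifP => h; first rewrite (vget_lt _ h) mxE; lra.
Qed.
End Aux.
Lemma rho_facts (R : realType) (alpha beta : R) : 0 < alpha -> 0 < beta ->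
  [/\ 0 < rho alpha beta, rho alpha beta < 1 &
      beta * (1 + rho alpha beta ^+ 2) = (alpha + 2 * beta) * rho alpha beta].
Proof.
move=> ha hb.
have hq : 1 < Qf alpha beta by rewrite /Qf ltr_pdivlMr // mul1r; lra.
rewrite /rho; set q := Qf alpha beta in hq *; set sq := Num.sqrt q.
have hsq2 : sq ^+ 2 = q by rewrite sqr_sqrtr //; lra.
have hsq0 : 0 <= sq by exact: sqrtr_ge0.
have hsq1 : 1 < sq by nra.
have hb' : beta = (alpha * sq ^+ 2 - alpha) / 4.
  rewrite hsq2 /q /Qf; field; lra.
split.
- apply: divr_gt0; lra.
- rewrite ltr_pdivrMr; lra.
- rewrite hb'; field; lra.
Qed.
Section W.
Variable R : realType.
Variables (T : nat) (alpha beta r : R).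
Hypotheses (ha : 0 < alpha) (hb : 0 < beta) (hr0 : 0 < r) (hr1 : r < 1)
  (hE : beta * (1 + r ^+ 2) = (alpha + 2 * beta) * r).

Ltac hyps := move: (ha) (hb) (hr0) (hr1) (hE) => ha' hb' hr0' hr1' hE'.

Definition cc := r / (beta * (1 - r ^+ 2)).

Definition wf (s i : nat) : R :=
  if (i <= s)%N then cc * (r ^+ (s - i) - r ^+ (s + i + 2))
  else cc * (1 - r ^+ (s + s + 2)) * r ^+ (i - s).

Lemma hbeta : beta = alpha * r / (1 - r) ^+ 2.
Proof.
hyps.
have h1 : (1 - r) ^+ 2 != 0 by apply: lt0r_neq0; apply: exprn_gt0; lra.
apply: (canRL (mulfK h1)); nra.
Qed.

Lemma cc_gt0 : 0 < cc.
Proof. hyps. rewrite /cc; apply: divr_gt0 => //; apply: mulr_gt0 => //; nra. Qed.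

Lemma cc1 : cc * (1 - r ^+ 2) = r / beta.
Proof.
hyps.
rewrite /cc; field; apply/andP; split; apply: lt0r_neq0; nra.
Qed.

Lemma cc2 : cc * (alpha + 2 * beta - 2 * beta * r) = 1.
Proof.
hyps.
have hd : beta * (1 - r ^+ 2) != 0 by apply: lt0r_neq0; apply: mulr_gt0 => //; nra.
have e : r * (alpha + 2 * beta - 2 * beta * r) = beta * (1 - r ^+ 2) by nra.
by rewrite /cc mulrAC e divff.
Qed.

Lemma wf_low s t : (t <= s)%N -> r ^+ (s - t) * (r / beta) <= wf s t.
Proof.
hyps.
move=> hts; rewrite /wf hts.
have -> : (s + t + 2 = (s - t) + (t + t) + 2)%N by lia.
rewrite exprD (exprD r (s - t)); set a := r ^+ (s - t); set P := r ^+ (t + t).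
have ha0 : 0 <= a by rewrite /a exprn_ge0 //; lra.
have hP0 : 0 <= P by rewrite /P exprn_ge0 //; lra.
have hP1 : P <= 1 by rewrite /P exprn_ile1 //; lra.
rewrite -cc1 -subr_ge0.
have -> : cc * (a - a * P * r ^+ 2) - a * (cc * (1 - r ^+ 2)) = cc * a * r ^+ 2 * (1 - P) by ring.
apply: mulr_ge0; last lra.
apply: mulr_ge0; last exact: sqr_ge0.
apply: mulr_ge0 => //; exact: ltW cc_gt0.
Qed.

Lemma eqL_lem (x y z : R) : x = y -> y <= z -> x <= z.
Proof. by move=> ->. Qed.
Ltac eqL e := apply: (@eqL_lem _ e); first by ring.

Lemma row_le (s t : nat) : (s < T)%N -> (t < T)%N ->
  alpha * wf s t + beta * (wf s t - (if t == 0%N then 0 else wf s t.-1))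
  + beta * (if (t.+1 < T)%N then wf s t - wf s t.+1 else 0) <= (t == s)%:R.
Proof.
hyps; move=> hs ht.
have Z : (alpha + 2 * beta) * r - beta - beta * r ^+ 2 = 0 by lra.
have hcc := cc_gt0.
case: (ltngtP t s) => hts.
- idtac.
  have [k hk] : exists k, s = (t + k).+1 by exists (s - t.+1)%N; lia.
  subst s.
  have -> : (t.+1 < T)%N by lia.
  have hp : (if t == 0%N then 0 else wf (t + k).+1 t.-1)
            = cc * (r ^+ k.+2 - r ^+ (t + t + k + 2)).
    case: (t) => [|t'] /=.
      have -> : (0 + 0 + k + 2 = k.+2)%N by lia.
      by rewrite subrr mulr0.
    rewrite /wf.
    have -> : (t' <= (t'.+1 + k).+1)%N by lia.
    have -> : ((t'.+1 + k).+1 - t' = k.+2)%N by lia.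
    by have -> : ((t'.+1 + k).+1 + t' + 2 = t'.+1 + t'.+1 + k + 2)%N by lia.
  rewrite hp /wf.
  have -> : (t <= (t + k).+1)%N by lia.
  have -> : (t.+1 <= (t + k).+1)%N by lia.
  have -> : ((t + k).+1 - t = k.+1)%N by lia.
  have -> : ((t + k).+1 + t + 2 = (t + t + k + 2).+1)%N by lia.
  have -> : ((t + k).+1 - t.+1 = k)%N by lia.
  have -> : ((t + k).+1 + t.+1 + 2 = (t + t + k + 2).+2)%N by lia.
  rewrite !exprS; set a := r ^+ k; set b := r ^+ (t + t + k + 2).
  have -> : alpha * (cc * (r * a - r * b)) + beta * (cc * (r * a - r * b) - cc * (r * (r * a) - b)) + beta * (cc * (r * a - r * b) - cc * (a - r * (r * b))) = cc * (a - b) * ((alpha + 2 * beta) * r - beta - beta * r ^+ 2) by ring.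
  by rewrite Z mulr0 ler0n.
- idtac.
  have [k hk] : exists k, t = (s + k).+1 by exists (t - s.+1)%N; lia.
  subst t; rewrite /=.
  set M := cc * (1 - r ^+ (s + s + 2)).
  have hM : 0 <= M.
    apply: mulr_ge0; first exact: ltW.
    rewrite subr_ge0; apply: exprn_ile1; lra.
  have hp : wf s (s + k) = M * r ^+ k.
    case: (k) => [|k'].
      by rewrite addn0 /wf leqnn subnn expr0 mulr1.
    rewrite /wf.
    have -> : (s + k'.+1 <= s)%N = false by lia.
    by have -> : (s + k'.+1 - s = k'.+1)%N by lia.
  rewrite hp /wf.
  have -> : ((s + k).+1 <= s)%N = false by lia.
  have -> : ((s + k).+2 <= s)%N = false by lia.
  have -> : ((s + k).+1 - s = k.+1)%N by lia.
  have -> : ((s + k).+2 - s = k.+2)%N by lia.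
  rewrite -/M !exprS; set a := r ^+ k.
  have ha0 : 0 <= a by apply: exprn_ge0; lra.
  case: ifP => _.
    eqL (M * a * ((alpha + 2 * beta) * r - beta - beta * r ^+ 2)).
    by rewrite Z mulr0 ler0n.
  eqL (M * a * (alpha * r + beta * r - beta)).
  rewrite [X in _ <= X](_ : _ = 0) //; apply: mulr_ge0_le0; first exact: mulr_ge0.
  nra.
- subst t.
  have hp : (if s == 0%N then 0 else wf s s.-1) = cc * (r - r * r ^+ (s + s)).
    case: (s) => [|s'] /=.
      by rewrite addn0 expr0 mulr1 subrr mulr0.
    rewrite /wf leqnSn subSnn expr1.
    have -> : (s'.+1 + s' + 2 = (s'.+1 + s'.+1).+1)%N by lia.
    by rewrite exprS.
  rewrite hp /wf leqnn ltnn subnn subSnn expr0 expr1.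
  have -> : (s + s + 2 = (s + s).+2)%N by lia.
  rewrite !exprS; set P := r ^+ (s + s).
  have hP0 : 0 <= P by apply: exprn_ge0; lra.
  have hP1 : P <= 1 by apply: exprn_ile1; lra.
  case: ifP => _.
    eqL (cc * (alpha + 2 * beta - 2 * beta * r)
         - cc * P * r * ((alpha + 2 * beta) * r - beta - beta * r ^+ 2)).
    by rewrite Z cc2 mulr0 subr0.
  eqL (cc * (alpha + 2 * beta - 2 * beta * r)
       - cc * P * r * ((alpha + 2 * beta) * r - beta - beta * r ^+ 2)
       - beta * cc * (1 - r) * (1 - r * (r * P))).
  rewrite Z cc2 mulr0 subr0 gerBl.
  apply: mulr_ge0; last nra.
  apply: mulr_ge0; last lra.
  apply: mulr_ge0; lra.
Qed.
End W.


Theorem lemma5 (R : realType) (alpha beta D : R) (T : nat)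
  (halpha : 0 < alpha) (hbeta : 0 < beta) (hD : 0 < D) (hT : (1 <= T)%N)
  (theta : 'cV[R]_T) (htheta : inXT D theta) :
  exists A : 'M[R]_T,
    is_argmin alpha beta D theta (A *m theta) /\
    forall t s : 'I_T, (t <= s)%N ->
      alpha / (alpha + beta) * (1 - rho alpha beta) * rho alpha beta ^+ (s - t)
        <= A t s.
Proof.
have [hr0 hr1 hE] := rho_facts halpha hbeta.
set r := rho alpha beta in hr0 hr1 hE *.
set Hm := H T alpha beta.
have hU : Hm \in unitmx := H_unit halpha hbeta hT.
exists (alpha *: invmx Hm).
have hx : Hm *m ((alpha *: invmx Hm) *m theta) = alpha *: theta.
  by rewrite -scalemxAl -scalemxAr mulKVmx.
split.
- split.
  + move=> t; set x := _ *m theta.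
    have hD2 : 0 <= D / 2 by lra.
    have hHx i : (Hm *m x) i 0 = alpha * theta i 0 by rewrite hx mxE.
    apply/andP; split.
    * have hc : forall i, (Hm *m (- (const_mx (D / 2) : 'cV[R]_T))) i 0 <= (Hm *m x) i 0.
        move=> i; have e (M : 'cV[R]_T) : (- M) i 0 = - M i 0 by rewrite mxE.
        rewrite mulmxN e hHx.
        have := H_const halpha hbeta hD2 i; have := htheta i; move/andP=> [h1 h2]; nra.
      have := compare halpha hbeta hT hc t; rewrite !mxE; lra.
    * have hc : forall i, (Hm *m x) i 0 <= (Hm *m (const_mx (D / 2) : 'cV[R]_T)) i 0.
        move=> i; rewrite hHx.
        have := H_const halpha hbeta hD2 i; have := htheta i; move/andP=> [h1 h2]; nra.
      have := compare halpha hbeta hT hc t; rewrite !mxE; lra.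
  + by move=> y _; apply: cost_min.
- move=> t s hts.
  rewrite mxE.
  have -> : invmx Hm t s = (invmx Hm *m (delta_mx s 0 : 'cV[R]_T)) t 0 by rewrite -colE mxE.
  set g := invmx Hm *m (delta_mx s 0 : 'cV[R]_T).
  set w : 'cV[R]_T := \col_(i < T) wf beta r s i.
  have hwg : forall i, w i 0 <= g i 0.
    apply: (compare halpha hbeta hT) => i.
    rewrite /g mulKVmx // H_mul.
    have -> : Defs.prev w i = if (i : nat) == 0%N then 0 else wf beta r s (i : nat).-1.
      rewrite /Defs.prev; case: ifP => // hi0.
      have h1 : ((i : nat).-1 < T)%N by apply: leq_ltn_trans (leq_pred i) (ltn_ord i).
      by rewrite (vget_lt _ h1) mxE.
    have -> : (if ((i : nat).+1 < T)%N then w i 0 - vget w i.+1 else 0)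
            = (if ((i : nat).+1 < T)%N then wf beta r s i - wf beta r s (i : nat).+1 else 0).
      case: ifP => // h; by rewrite (vget_lt _ h) !mxE.
    rewrite [w i 0]mxE mxE eqxx andbT.
    exact: (row_le halpha hbeta hr0 hr1 hE (ltn_ord s) (ltn_ord i)).
  have := hwg t; rewrite [w t 0]mxE => hw.
  have hlow := wf_low halpha hbeta hr0 hr1 hE hts.
  set a := r ^+ (s - t) in hlow *.
  have ha0 : 0 <= a by apply: exprn_ge0; lra.
  have key : (1 - r) / (alpha + beta) <= r / beta.
    rewrite ler_pdivrMr; last lra.
    rewrite mulrAC ler_pdivlMr //; nra.
  have -> : alpha / (alpha + beta) * (1 - r) * a = alpha * (a * ((1 - r) / (alpha + beta))) by ring.
  apply: ler_wpM2l; first lra.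
  apply: le_trans hw.
  apply: le_trans hlow.
  by apply: ler_wpM2l.
Qed.
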